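(* Let $c\in\mathbb{C}$ with $|c|>1$, let $r=\sqrt{|c|^2-1}$, and define $\tau\colon S^1\to S^1$ (where $S^1=\{z\in\mathbb{C}:|z|=1\}$) by $\tau(z)=\dfrac{r^2}{\bar z-\bar c}+c$ if $|z-c|>r$ and $\tau(z)=z$ otherwise. Then for all $x,y\in S^1$, $$|\tau(x)-\tau(y)|\le\min\!\Big(1,\frac{r}{|x-c|}\Big)\min\!\Big(1,\frac{r}{|y-c|}\Big)|x-y|\le|x-y|.$$
   Context: In the Poincaré disk model $\mathbb{D}=\{|z|<1\}$ of the hyperbolic plane, $\{z\in\mathbb{D}:|z-c|=r\}$ is a hyperbolic line not through $0$, and $\tau$ is the one-way reflection in it (reflecting points on the same side as $0$), restricted to the boundary circle $S^1$. *)

(* Defs.v *)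
From Stdlib Require Import Reals Lra.
From Coquelicot Require Import Coquelicot.
Open Scope R_scope.

Definition refl_r (c : C) : R := sqrt (Cmod c ^ 2 - 1).

Definition tau (c : C) (z : C) : C :=
  let r := refl_r c in
  if Rlt_dec r (Cmod (z - c)) then
    Cplus (Cdiv (RtoC (r ^ 2)) (Cminus (Cconj z) (Cconj c))) c
  else z.

(* Main.v *)
Require Import Defs.
From Stdlib Require Import Reals Lra Psatz.
From Coquelicot Require Import Coquelicot.
Open Scope R_scope.

Lemma Cmod_sub (a b : C) :
  Cmod (Cminus a b) = sqrt ((fst a - fst b)^2 + (snd a - snd b)^2).
Proof. destruct a, b. unfold Cmod, Cminus, Cplus, Copp. cbn [fst snd].
  f_equal; ring. Qed.

Lemma le_by_sq a b : 0 <= b -> a^2 <= b^2 -> a <= b.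
Proof. intros Hb H. destruct (Rle_dec a b) as [|n]; [auto|]. nra. Qed.

Lemma sqrt_sq_pos q : 0 <= q -> (sqrt q)^2 = q.
Proof. intros; rewrite <- Rsqr_pow2; apply Rsqr_sqrt; auto. Qed.

Lemma refl_pos c : 1 < Cmod c -> 0 < refl_r c /\ refl_r c ^2 = Cmod c ^2 - 1.
Proof. intros H. unfold refl_r. split.
  apply sqrt_lt_R0. nra. apply sqrt_sq_pos. nra. Qed.

Lemma tau_out c z : refl_r c < Cmod (Cminus z c) ->
  tau c z = (fst c + refl_r c ^2 * (fst z - fst c) / ((fst z - fst c)^2 + (snd z - snd c)^2),
             snd c + refl_r c ^2 * (snd z - snd c) / ((fst z - fst c)^2 + (snd z - snd c)^2)).
Proof.
  intros H. assert (Hr : 0 <= refl_r c) by (unfold refl_r; apply sqrt_pos).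
  assert (Hd : 0 < (fst z - fst c)^2 + (snd z - snd c)^2).
  { rewrite Cmod_sub in H. destruct (Rle_dec ((fst z - fst c)^2 + (snd z - snd c)^2) 0) as [h|h].
    - assert (Ez : (fst z - fst c)^2 + (snd z - snd c)^2 = 0) by (apply Rle_antisym; [exact h | apply Rplus_le_le_0_compat; apply pow2_ge_0]).
      rewrite Ez, sqrt_0 in H. lra.
    - lra. }
  unfold tau. destruct Rlt_dec as [_|n]; [|lra].
  destruct c as [c1 c2], z as [z1 z2]. cbn [fst snd] in *.
  unfold Cdiv, Cminus, Cplus, Cmult, Cinv, Cconj, Copp, RtoC. cbn [fst snd].
  f_equal; field; lra.
Qed.


Lemma tau_in c z : ~ refl_r c < Cmod (Cminus z c) -> tau c z = z.
Proof. intros H. unfold tau. destruct Rlt_dec; [contradiction|reflexivity]. Qed.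

Lemma OO_c r c1 c2 x1 x2 y1 y2 :
  0 < (x1-c1)^2+(x2-c2)^2 -> 0 < (y1-c1)^2+(y2-c2)^2 ->
  (c1 + r^2*(x1-c1)/((x1-c1)^2+(x2-c2)^2) - (c1 + r^2*(y1-c1)/((y1-c1)^2+(y2-c2)^2)))^2
  + (c2 + r^2*(x2-c2)/((x1-c1)^2+(x2-c2)^2) - (c2 + r^2*(y2-c2)/((y1-c1)^2+(y2-c2)^2)))^2
  = r^2/((x1-c1)^2+(x2-c2)^2) * (r^2/((y1-c1)^2+(y2-c2)^2)) * ((x1-y1)^2 + (x2-y2)^2).
Proof. intros. field. lra. Qed.

Lemma OI_c r c1 c2 x1 x2 y1 y2 :
  0 < (x1-c1)^2+(x2-c2)^2 -> r^2 < (x1-c1)^2+(x2-c2)^2 -> (y1-c1)^2+(y2-c2)^2 <= r^2 ->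
  (c1 + r^2*(x1-c1)/((x1-c1)^2+(x2-c2)^2) - y1)^2
  + (c2 + r^2*(x2-c2)/((x1-c1)^2+(x2-c2)^2) - y2)^2
  <= r^2/((x1-c1)^2+(x2-c2)^2) * ((x1-y1)^2 + (x2-y2)^2).
Proof.
  intros H1 H2 H3.
  set (D1 := (x1-c1)^2+(x2-c2)^2) in *.
  set (D2 := (y1-c1)^2+(y2-c2)^2) in *.
  assert (Ez : (c1 + r^2*(x1-c1)/D1 - y1)^2 + (c2 + r^2*(x2-c2)/D1 - y2)^2
    = r^2/D1 * ((x1-y1)^2 + (x2-y2)^2) - (D1 - r^2) * (r^2 - D2) / D1).
  { unfold D1, D2. field. fold D1. lra. }
  rewrite Ez.
  assert (0 <= (D1 - r^2) * (r^2 - D2) / D1).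
  { apply Rdiv_le_0_compat; [apply Rmult_le_pos|]; lra. }
  lra.
Qed.

Lemma IO_c r c1 c2 x1 x2 y1 y2 :
  0 < (y1-c1)^2+(y2-c2)^2 -> r^2 < (y1-c1)^2+(y2-c2)^2 -> (x1-c1)^2+(x2-c2)^2 <= r^2 ->
  (x1 - (c1 + r^2*(y1-c1)/((y1-c1)^2+(y2-c2)^2)))^2
  + (x2 - (c2 + r^2*(y2-c2)/((y1-c1)^2+(y2-c2)^2)))^2
  <= 1 * (r^2/((y1-c1)^2+(y2-c2)^2)) * ((x1-y1)^2 + (x2-y2)^2).
Proof.
  intros H1 H2 H3. pose proof (OI_c r c1 c2 y1 y2 x1 x2 H1 H2 H3) as K.
  assert (E1 : (x1 - (c1 + r^2*(y1-c1)/((y1-c1)^2+(y2-c2)^2)))^2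
  + (x2 - (c2 + r^2*(y2-c2)/((y1-c1)^2+(y2-c2)^2)))^2
  = (c1 + r^2*(y1-c1)/((y1-c1)^2+(y2-c2)^2) - x1)^2
  + (c2 + r^2*(y2-c2)/((y1-c1)^2+(y2-c2)^2) - x2)^2) by ring.
  assert (E2 : 1 * (r^2/((y1-c1)^2+(y2-c2)^2)) * ((x1-y1)^2 + (x2-y2)^2)
    = r^2/((y1-c1)^2+(y2-c2)^2) * ((y1-x1)^2 + (y2-x2)^2)) by ring.
  rewrite E1, E2. exact K.
Qed.

Lemma div_le1 r s : 0 < s -> r < s -> r / s <= 1.
Proof. intros. assert (r/s = 1 - (s-r)/s) by (field; lra).
  assert (0 <= (s-r)/s) by (apply Rdiv_le_0_compat; lra). lra. Qed.

Lemma div_ge1 r s : 0 < s -> s <= r -> 1 <= r / s.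
Proof. intros. assert (r/s = 1 + (r-s)/s) by (field; lra).
  assert (0 <= (r-s)/s) by (apply Rdiv_le_0_compat; lra). lra. Qed.

Theorem mainTheorem5 (c : C) (hc : 1 < Cmod c) (x y : C)
  (hx : Cmod x = 1) (hy : Cmod y = 1) :
  Cmod (Cminus (tau c x) (tau c y))
    <= Rmin 1 (refl_r c / Cmod (Cminus x c)) * Rmin 1 (refl_r c / Cmod (Cminus y c))
       * Cmod (Cminus x y)
  /\ Rmin 1 (refl_r c / Cmod (Cminus x c)) * Rmin 1 (refl_r c / Cmod (Cminus y c))
       * Cmod (Cminus x y) <= Cmod (Cminus x y).
Proof.
  destruct (refl_pos c hc) as [Hr Hr2].
  destruct c as [c1 c2], x as [x1 x2], y as [y1 y2].
  assert (Hc2 : Cmod (c1,c2) ^ 2 = c1 ^2 + c2 ^2) by (apply sqrt_sq_pos; apply Rplus_le_le_0_compat; apply pow2_ge_0).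
  assert (Hx2 : Cmod (x1,x2) ^ 2 = x1 ^2 + x2 ^2) by (apply sqrt_sq_pos; apply Rplus_le_le_0_compat; apply pow2_ge_0).
  assert (Hy2 : Cmod (y1,y2) ^ 2 = y1 ^2 + y2 ^2) by (apply sqrt_sq_pos; apply Rplus_le_le_0_compat; apply pow2_ge_0).
  rewrite hx in Hx2. rewrite hy in Hy2.
  set (r := refl_r (c1, c2)) in *.
  assert (Hm : Cmod (Cminus (x1,x2) (y1,y2)) ^2 = (x1-y1)^2+(x2-y2)^2).
  { rewrite Cmod_sub. apply sqrt_sq_pos. cbn [fst snd]. apply Rplus_le_le_0_compat; apply pow2_ge_0. }
  assert (Hs1 : Cmod (Cminus (x1,x2) (c1,c2)) ^2 = (x1-c1)^2+(x2-c2)^2).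
  { rewrite Cmod_sub. apply sqrt_sq_pos. cbn [fst snd]. apply Rplus_le_le_0_compat; apply pow2_ge_0. }
  assert (Hs2 : Cmod (Cminus (y1,y2) (c1,c2)) ^2 = (y1-c1)^2+(y2-c2)^2).
  { rewrite Cmod_sub. apply sqrt_sq_pos. cbn [fst snd]. apply Rplus_le_le_0_compat; apply pow2_ge_0. }
  set (s1 := Cmod (Cminus (x1,x2) (c1,c2))) in *.
  set (s2 := Cmod (Cminus (y1,y2) (c1,c2))) in *.
  set (m := Cmod (Cminus (x1,x2) (y1,y2))) in *.
  assert (Hs1p : 0 <= s1) by apply Cmod_ge_0.
  assert (Hs2p : 0 <= s2) by apply Cmod_ge_0.
  assert (Hmp : 0 <= m) by apply Cmod_ge_0.
  assert (D1p : 0 < (x1-c1)^2+(x2-c2)^2).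
  { destruct (Rle_dec ((x1-c1)^2+(x2-c2)^2) 0) as [h|h]; [|lra].
    assert (A : (x1-c1)^2 = 0) by (pose proof (pow2_ge_0 (x1-c1)); pose proof (pow2_ge_0 (x2-c2)); lra).
    assert (B : (x2-c2)^2 = 0) by (pose proof (pow2_ge_0 (x1-c1)); pose proof (pow2_ge_0 (x2-c2)); lra).
    assert (c1 = x1) by (clear - A; nra). assert (c2 = x2) by (clear - B; nra). subst c1 c2.
    clear - hc Hc2 Hx2. nra. }
  assert (D2p : 0 < (y1-c1)^2+(y2-c2)^2).
  { destruct (Rle_dec ((y1-c1)^2+(y2-c2)^2) 0) as [h|h]; [|lra].
    assert (A : (y1-c1)^2 = 0) by (pose proof (pow2_ge_0 (y1-c1)); pose proof (pow2_ge_0 (y2-c2)); lra).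
    assert (B : (y2-c2)^2 = 0) by (pose proof (pow2_ge_0 (y1-c1)); pose proof (pow2_ge_0 (y2-c2)); lra).
    assert (c1 = y1) by (clear - A; nra). assert (c2 = y2) by (clear - B; nra). subst c1 c2.
    clear - hc Hc2 Hy2. nra. }
  assert (s1p : 0 < s1) by nra.
  assert (s2p : 0 < s2) by nra.
  assert (M1 : 0 <= Rmin 1 (r/s1) <= 1).
  { split; [apply Rmin_glb; [lra| apply Rdiv_le_0_compat; lra] | apply Rmin_l]. }
  assert (M2 : 0 <= Rmin 1 (r/s2) <= 1).
  { split; [apply Rmin_glb; [lra| apply Rdiv_le_0_compat; lra] | apply Rmin_l]. }
  split.
  2:{ apply Rle_trans with (1*m); [|lra]. apply Rmult_le_compat_r; [lra|].
      replace 1 with (1*1) at 3 by ring. apply Rmult_le_compat; lra. }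
  destruct (Rlt_dec r s1) as [o1|i1]; destruct (Rlt_dec r s2) as [o2|i2].
  - rewrite (tau_out _ _ o1), (tau_out _ _ o2).
    rewrite (Rmin_right _ _ (div_le1 _ _ s1p o1)), (Rmin_right _ _ (div_le1 _ _ s2p o2)).
    apply le_by_sq.
    + apply Rmult_le_pos; [|lra]. apply Rmult_le_pos; apply Rdiv_le_0_compat; lra.
    + rewrite Cmod_sub, sqrt_sq_pos; cbn [fst snd]; fold r.
      * replace ((r / s1 * (r / s2) * m)^2) with (r^2/s1^2 * (r^2/s2^2) * m^2) by (field; lra).
        rewrite Hs1, Hs2, Hm. right. apply OO_c; lra.
      * apply Rplus_le_le_0_compat; apply pow2_ge_0.
  - rewrite (tau_out _ _ o1), (tau_in _ _ i2).
    rewrite (Rmin_right _ _ (div_le1 _ _ s1p o1)), (Rmin_left _ _ (div_ge1 _ _ s2p (Rnot_lt_le _ _ i2))).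
    apply le_by_sq.
    + apply Rmult_le_pos; [|lra]. apply Rmult_le_pos; [apply Rdiv_le_0_compat|]; lra.
    + rewrite Cmod_sub, sqrt_sq_pos; cbn [fst snd]; fold r.
      * replace ((r / s1 * 1 * m)^2) with (r^2/s1^2 * m^2) by (field; lra).
        rewrite Hs1, Hm. apply OI_c; nra.
      * apply Rplus_le_le_0_compat; apply pow2_ge_0.
  - rewrite (tau_out _ _ o2), (tau_in _ _ i1).
    rewrite (Rmin_left _ _ (div_ge1 _ _ s1p (Rnot_lt_le _ _ i1))), (Rmin_right _ _ (div_le1 _ _ s2p o2)).
    apply le_by_sq.
    + apply Rmult_le_pos; [|lra]. apply Rmult_le_pos; [|apply Rdiv_le_0_compat]; lra.
    + rewrite Cmod_sub, sqrt_sq_pos; cbn [fst snd]; fold r.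
      * replace ((1 * (r / s2) * m)^2) with (1 * (r^2/s2^2) * m^2) by (field; lra).
        rewrite Hs2, Hm. apply IO_c; nra.
      * apply Rplus_le_le_0_compat; apply pow2_ge_0.
  - rewrite (Rmin_left _ _ (div_ge1 _ _ s1p (Rnot_lt_le _ _ i1))), (Rmin_left _ _ (div_ge1 _ _ s2p (Rnot_lt_le _ _ i2))).
    unfold tau. fold r. fold s1 s2.
    destruct (Rlt_dec r s1); [lra|]. destruct (Rlt_dec r s2); [lra|]. fold m. lra.
Qed.
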